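(* Let $n\ge 3$ and $S_n$ be as defined below. The element $z=a_1a_2\cdots a_n$ is central in $S_n$. Moreover, let $\pi\colon FM_n\to S_n$ be the natural epimorphism from the free monoid on $a_1,\dots,a_n$ and let $P=zS_n$. Then $S_n\setminus P=\{a\in S_n : |\pi^{-1}(a)|=1\}$, i.e. an element of $S_n$ has a unique word representative in $FM_n$ if and only if it does not lie in $P$. Consequently the Rees quotient $S_n/P$ is isomorphic to the Rees quotient $FM_n/\pi^{-1}(P)$ (via the natural map), and $K[S_n]/K[P]$ is isomorphic to a monomial algebra (a quotient of the free algebra $K\langle a_1,\dots,a_n\rangle$ by an ideal spanned by words), for any field $K$.
   Context: For $n\ge 3$, $S_n$ denotes the monoid with generators $a_1,\dots,a_n$ and defining relations $a_1a_2\cdots a_n=a_{\sigma(1)}a_{\sigma(2)}\cdots a_{\sigma(n)}$ for all $\sigma$ in the cyclic subgroup of $\operatorname{Sym}_n$ generated by the cycle $(1,2,\dots,n)$. $K[S_n]$ denotes the monoid algebra over a field $K$, and for an ideal $I$ of $S_n$, $K[I]$ denotes the $K$-linear span of $I$ in $K[S_n]$ (an ideal of $K[S_n]$). *)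

(* Defs.v *)
From Stdlib Require Import Relations.
From mathcomp Require Import all_boot.
Set Implicit Arguments. Unset Strict Implicit. Unset Printing Implicit Defensive.

(* Words of the free monoid FM_n on a_1..a_n; letter a_(i+1) is i : 'I_n. *)
Definition word (n : nat) := seq 'I_n.

Definition zword (n : nat) : word n := enum 'I_n.

(* a_{sigma(1)} ... a_{sigma(n)} for sigma = (1 2 ... n)^k is the rotation rot k z. *)
Inductive srel (n : nat) : word n -> word n -> Prop :=
| SRel (u v : word n) (k : nat) : k < n ->
    srel (u ++ zword n ++ v) (u ++ rot k (zword n) ++ v).

(* The congruence on FM_n generated by the defining relations of S_n:
   congr n u v  <->  pi u = pi v in S_n. *)
Definition congr (n : nat) : relation (word n) := clos_refl_sym_trans _ (@srel n).
Arguments congr n _ _ : clear implicits.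

(* u is in pi^{-1}(P), where P = z S_n. *)
Definition inP (n : nat) (u : word n) : Prop :=
  exists w : word n, congr n u (zword n ++ w).
Arguments inP n _ : clear implicits.

(* Main.v *)
Require Import Defs.
From Stdlib Require Import Relations.
From mathcomp Require Import all_boot.

Lemma csym {n} {u v : word n} : congr n u v -> congr n v u.
Proof. exact: rst_sym. Qed.
Lemma ctrans {n} {u v w : word n} : congr n u v -> congr n v w -> congr n u w.
Proof. exact: rst_trans. Qed.

Section S.
Variable n : nat.
Local Notation z := (zword n).

Lemma cong_ctx (p s u v : word n) : congr n u v -> congr n (p ++ u ++ s) (p ++ v ++ s).
Proof.
elim=> {u v} [u v H|u|u v _ IH|u v w _ IH1 _ IH2].
- case: H => u0 v0 k hk.
  have -> : p ++ (u0 ++ z ++ v0) ++ s = (p ++ u0) ++ z ++ (v0 ++ s) by rewrite !catA.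
  have -> : p ++ (u0 ++ rot k z ++ v0) ++ s = (p ++ u0) ++ rot k z ++ (v0 ++ s) by rewrite !catA.
  by apply: rst_step; constructor.
- exact: rst_refl.
- exact: rst_sym.
- exact: rst_trans IH2.
Qed.

Lemma congE (p s u v a b : word n) : congr n u v -> a = p ++ u ++ s -> b = p ++ v ++ s -> congr n a b.
Proof. by move=> H -> ->; apply: cong_ctx. Qed.

Lemma step (p s : word n) k : k < n -> congr n (p ++ z ++ s) (p ++ rot k z ++ s).
Proof. by move=> hk; apply: rst_step; constructor. Qed.

Lemma stepz k : k < n -> congr n z (rot k z).
Proof. by move=> hk; have := step [::] [::] k hk; rewrite /= !cats0. Qed.

Lemma sz : size z = n. Proof. by rewrite /zword size_enum_ord. Qed.

Lemma rot_snoc (i : 'I_n) : rot i z ++ [:: i] = i :: rot i.+1 z.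
Proof.
have hi : i < size z by rewrite sz.
rewrite /rot (drop_nth i hi) (take_nth i hi) /zword nth_ord_enum.
by rewrite -cats1 /= catA.
Qed.

Lemma L1 (i : 'I_n) : congr n (z ++ [:: i]) (i :: z).
Proof.
apply: ctrans (_ : congr n (rot i z ++ [:: i]) _).
  by apply: (congE [::] [:: i] _ _ _ _ (stepz _ (ltn_ord i))).
rewrite rot_snoc.
have : i.+1 <= n by exact: ltn_ord i.
rewrite leq_eqVlt => /orP [/eqP e|lt].
  by rewrite rot_oversize ?sz ?e //; exact: rst_refl.
apply: (congE [:: i] [::] _ _ _ _ (csym (stepz _ lt))) => /=; by rewrite ?cats0.
Qed.

Lemma central (w : word n) : congr n (z ++ w) (w ++ z).
Proof.
elim: w => [|i w IH]; first by rewrite cats0; exact: rst_refl.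
apply: ctrans (_ : congr n (i :: z ++ w) _).
  by apply: (congE [::] w _ _ _ _ (L1 i)); rewrite //= -catA.
by apply: (congE [:: i] [::] _ _ _ _ IH); rewrite /= ?cats0.
Qed.

Lemma factor_inP (p s : word n) k : k < n -> inP n (p ++ rot k z ++ s).
Proof.
move=> hk; exists (p ++ s).
apply: ctrans (csym (step p s k hk)) _.
apply: (congE [::] s _ _ _ _ (csym (central p))); by rewrite /= ?catA.
Qed.

End S.

Theorem mainTheorem2 (n : nat) (hn : 3 <= n) :
  (* z is central in S_n *)
  (forall w : word n, congr n (zword n ++ w) (w ++ zword n)) /\
  (* pi(u) \notin P  iff  pi^{-1}(pi(u)) = {u} *)
  (forall u : word n, ~ inP n u <-> (forall v : word n, congr n v u -> v = u)) /\
  (* the natural map FM_n / pi^{-1}(P) -> S_n / P is injective on nonzero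
     elements (it is always a surjective homomorphism), hence an isomorphism *)
  (forall u v : word n, ~ inP n u -> ~ inP n v -> congr n u v -> u = v).
Proof.
have fwd : forall u : word n, ~ inP n u -> forall v, congr n v u -> v = u.
  move=> u nP v Hvu; have H := proj1 (clos_rst_rst1n_iff _ _ _ _) (csym Hvu).
  case: H => // y x' [R|R] _.
  - case: R nP => p s k hk nP; exfalso; apply: nP.
    have h0 : 0 < n by apply: leq_trans hn.
    by have := factor_inP n p s 0 h0; rewrite rot0.
  - case: R nP => p s k hk nP; exfalso; exact: nP (factor_inP n p s k hk).
split; first exact: central.
split; last first.
  by move=> u v nu nv H; apply: esym; apply: fwd nu _ (csym H).
move=> u; split; first exact: fwd.
move=> H [w Hw].
have h1 : u = zword n ++ w := esym (H _ (csym Hw)).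
have h2 : 1 < n by apply: leq_trans hn.
have h3 := H (rot 1 (zword n) ++ w)
  (ctrans (csym (congE n [::] w _ _ _ _ (stepz n _ h2) erefl erefl)) (csym Hw)).
rewrite h1 in h3.
have := f_equal (take n) h3.
rewrite !take_size_cat ?size_rot ?sz ?size_enum_ord // => /(f_equal (map val)).
rewrite map_rot /zword val_enum_ord.
case: n hn {H Hw h1 h2 h3 fwd u w} => [|[|[|m]]] //=.
Qed.
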